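(* Let $\mathbb{D}$ be a division ring, let $2\le m,n<\infty$, let $P$ be an $n\times m$ matrix over $\mathbb{D}$ with $\operatorname{rank}P = r$, and let $\mathcal{A}=\mathfrak{M}(\mathbb{D}, m, n, P)$. Then: (1) if $r\ge 1$, then $\mathcal{A}$ is generated by its idempotents as a $\mathbb{D}$-algebra; (2) if $r\ge 2$, then $\mathcal{A}$ is generated by its idempotents as a ring; (3) if $r\ge 2$ and $\operatorname{char}\mathbb{D}\ne 2$, then $\mathcal{A}$ is additively spanned by Jordan products of idempotents, i.e. $\mathcal{A}$ equals the additive subgroup generated by all elements $e\circ f = e\bullet f + f\bullet e$ with $e,f\in\mathcal{A}$ idempotents.
   Context: $\mathfrak{M}(\mathbb{D}, m, n, P)$ denotes the set of all $m\times n$ matrices over the division ring $\mathbb{D}$, with entrywise addition, multiplication $A\bullet B = APB$, and (left) scalar multiplication by elements of $\mathbb{D}$ entrywise. An element $e$ is an idempotent if $e\bullet e = e$. *)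

(* Defs.v *)
From HB Require Import structures.
From mathcomp Require Import all_boot all_order all_algebra.
Set Implicit Arguments. Unset Strict Implicit. Unset Printing Implicit Defensive.
Import GRing.Theory.
Local Open Scope ring_scope.

(* D : unitRingType is a division ring when every nonzero element is a unit
   (unitRingType is already non-trivial: 1 != 0). *)
Definition division_ring (D : unitRingType) : Prop :=
  forall x : D, x != 0 -> x \is a GRing.unit.

Definition rows_left_indep (D : unitRingType) (k p : nat) (M : 'M[D]_(k, p)) : Prop :=
  forall c : 'rV[D]_k, c *m M = 0 -> c = 0.

(* rank (= left row rank) of a matrix over a division ring:
   the maximal number of left linearly independent rows. *)
Definition dr_rank (D : unitRingType) (n m : nat) (P : 'M[D]_(n, m)) (r : nat) : Prop :=
  (exists f : 'I_r -> 'I_n, injective f /\ rows_left_indep (rowsub f P)) /\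
  (forall (k : nat) (f : 'I_k -> 'I_n), injective f -> rows_left_indep (rowsub f P) -> (k <= r)%N).

(* The product of M(D, m, n, P): A • B = A P B. *)
Definition bmul (D : unitRingType) (m n : nat) (P : 'M[D]_(n, m))
  (A B : 'M[D]_(m, n)) : 'M[D]_(m, n) := A *m P *m B.

Definition idemP (D : unitRingType) (m n : nat) (P : 'M[D]_(n, m)) (e : 'M[D]_(m, n)) : Prop :=
  bmul P e e = e.

Inductive gen_alg (D : unitRingType) (m n : nat) (P : 'M[D]_(n, m))
  (S : 'M[D]_(m, n) -> Prop) : 'M[D]_(m, n) -> Prop :=
  | ga_base x : S x -> gen_alg P S x
  | ga_zero : gen_alg P S 0
  | ga_add x y : gen_alg P S x -> gen_alg P S y -> gen_alg P S (x + y)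
  | ga_opp x : gen_alg P S x -> gen_alg P S (- x)
  | ga_mul x y : gen_alg P S x -> gen_alg P S y -> gen_alg P S (bmul P x y)
  | ga_scale (d : D) x : gen_alg P S x -> gen_alg P S (d *: x).

Inductive gen_ring (D : unitRingType) (m n : nat) (P : 'M[D]_(n, m))
  (S : 'M[D]_(m, n) -> Prop) : 'M[D]_(m, n) -> Prop :=
  | gr_base x : S x -> gen_ring P S x
  | gr_zero : gen_ring P S 0
  | gr_add x y : gen_ring P S x -> gen_ring P S y -> gen_ring P S (x + y)
  | gr_opp x : gen_ring P S x -> gen_ring P S (- x)
  | gr_mul x y : gen_ring P S x -> gen_ring P S y -> gen_ring P S (bmul P x y).

Inductive gen_add (V : zmodType) (S : V -> Prop) : V -> Prop :=
  | gd_base x : S x -> gen_add S x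
  | gd_zero : gen_add S 0
  | gd_add x y : gen_add S x -> gen_add S y -> gen_add S (x + y)
  | gd_opp x : gen_add S x -> gen_add S (- x).

Definition jordan_idem (D : unitRingType) (m n : nat) (P : 'M[D]_(n, m))
  (x : 'M[D]_(m, n)) : Prop :=
  exists e f, idemP P e /\ idemP P f /\ x = bmul P e f + bmul P f e.

(* Main.v *)
Require Import Defs.
From mathcomp Require Import all_boot all_order all_algebra.
Set Implicit Arguments. Unset Strict Implicit. Unset Printing Implicit Defensive.
Import GRing.Theory.
Local Open Scope ring_scope.

Definition pr (D : unitRingType) (m n : nat) (P : 'M[D]_(n, m))
  (w : 'rV[D]_n) (u : 'cV[D]_m) : 'M[D]_1 := w *m P *m u.

Lemma bmul_r1 (D : unitRingType) (m n : nat) (P : 'M[D]_(n, m))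
  (u v : 'cV[D]_m) (z w : 'rV[D]_n) :
  bmul P (u *m z) (v *m w) = u *m pr P z v *m w.
Proof. by rewrite /bmul /pr !mulmxA. Qed.

Lemma idem_r1 (D : unitRingType) (m n : nat) (P : 'M[D]_(n, m))
  (u : 'cV[D]_m) (w : 'rV[D]_n) : pr P w u = 1%:M -> idemP P (u *m w).
Proof. by move=> h; rewrite /idemP bmul_r1 h mulmx1. Qed.

Lemma prDl (D : unitRingType) (m n : nat) (P : 'M[D]_(n, m)) w1 w2 (u : 'cV[D]_m) :
  pr P (w1 + w2) u = pr P w1 u + pr P w2 u.
Proof. by rewrite /pr !mulmxDl. Qed.
Lemma prBl (D : unitRingType) (m n : nat) (P : 'M[D]_(n, m)) w1 w2 (u : 'cV[D]_m) :
  pr P (w1 - w2) u = pr P w1 u - pr P w2 u.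
Proof. by rewrite /pr !mulmxBl. Qed.
Lemma prDr (D : unitRingType) (m n : nat) (P : 'M[D]_(n, m)) w (u1 u2 : 'cV[D]_m) :
  pr P w (u1 + u2) = pr P w u1 + pr P w u2.
Proof. by rewrite /pr !mulmxDr. Qed.
Lemma prBr (D : unitRingType) (m n : nat) (P : 'M[D]_(n, m)) w (u1 u2 : 'cV[D]_m) :
  pr P w (u1 - u2) = pr P w u1 - pr P w u2.
Proof. by rewrite /pr !mulmxBr. Qed.
Lemma prMl (D : unitRingType) (m n : nat) (P : 'M[D]_(n, m)) (a : 'M[D]_1) w (u : 'cV[D]_m) :
  pr P (a *m w) u = a *m pr P w u.
Proof. by rewrite /pr !mulmxA. Qed.
Lemma prMr (D : unitRingType) (m n : nat) (P : 'M[D]_(n, m)) (a : 'M[D]_1) w (u : 'cV[D]_m) :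
  pr P w (u *m a) = pr P w u *m a.
Proof. by rewrite /pr !mulmxA. Qed.

Lemma ring_alg (D : unitRingType) (m n : nat) (P : 'M[D]_(n, m)) S x :
  gen_ring P S x -> gen_alg P S x.
Proof. elim=> *; by constructor. Qed.

Lemma gr_sub (D : unitRingType) (m n : nat) (P : 'M[D]_(n, m)) S x y :
  gen_ring P S x -> gen_ring P S y -> gen_ring P S (x - y).
Proof. by move=> hx hy; apply: gr_add => //; apply: gr_opp. Qed.
Lemma gd_sub (V : zmodType) (S : V -> Prop) x y :
  gen_add S x -> gen_add S y -> gen_add S (x - y).
Proof. by move=> hx hy; apply: gd_add => //; apply: gd_opp. Qed.

Lemma LA (D : unitRingType) (m n : nat) (P : 'M[D]_(n, m)) (u : 'cV[D]_m) (w z : 'rV[D]_n) :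
  pr P w u = 1%:M -> pr P z u = 0 -> gen_ring P (idemP P) (u *m z).
Proof.
move=> hw hz.
have -> : u *m z = u *m (w + z) - u *m w by rewrite mulmxDr addrC addKr.
apply: gr_sub; apply: gr_base; apply: idem_r1 => //.
by rewrite prDl hw hz addr0.
Qed.

Lemma LA' (D : unitRingType) (m n : nat) (P : 'M[D]_(n, m)) (s v : 'cV[D]_m) (w : 'rV[D]_n) :
  pr P w s = 1%:M -> pr P w v = 0 -> gen_ring P (idemP P) (v *m w).
Proof.
move=> hs hv.
have -> : v *m w = (s + v) *m w - s *m w by rewrite mulmxDl addrC addKr.
apply: gr_sub; apply: gr_base; apply: idem_r1 => //.
by rewrite prDr hs hv addr0.
Qed.

Lemma decomp (D : unitRingType) (m n : nat) (x : 'M[D]_(m, n)) :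
  x = \sum_(a < m) delta_mx a 0 *m row a x.
Proof.
apply/matrixP => i j; rewrite summxE (bigD1 i) //= big1 => [|k kneq].
  by rewrite addr0 !mxE big_ord1 !mxE !eqxx mul1r.
rewrite !mxE big_ord1 !mxE eq_sym (negbTE kneq) /=. by rewrite mul0r.
Qed.

Lemma all_cols (D : unitRingType) (m n : nat) (P : 'M[D]_(n, m)) (S : 'M[D]_(m, n) -> Prop) :
  division_ring D ->
  (forall x y, S x -> S y -> S (x + y)) -> (forall x, S x -> S (- x)) -> S 0 ->
  P != 0 ->
  (forall u y w, pr P w u = 1%:M -> S (u *m y)) -> forall x, S x.
Proof.
move=> hD hadd hopp h0 hP hgood.
have good : forall u : 'cV[D]_m, P *m u != 0 -> exists w, pr P w u = 1%:M.
  move=> u hu.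
  have [k hk] : exists k, (P *m u) k 0 != 0.
    case: (pickP (fun k => (P *m u) k 0 != 0)) => [k hk|hn]; first by exists k.
    exfalso; move/eqP: hu; apply; apply/matrixP => i j; rewrite ord1.
    by move: (hn i) => /negbFE/eqP ->; rewrite mxE.
  exists (((P *m u) k 0)^-1 *: delta_mx 0 k).
  rewrite /pr -mulmxA -scalemxAl -rowE.
  have -> : row k (P *m u) = ((P *m u) k 0)%:M.
    by apply/matrixP => i j; rewrite !ord1 !mxE eqxx mulr1n.
  by rewrite scale_scalar_mx mulVr // hD.
have [l hl] : exists l, P *m (delta_mx l 0 : 'cV[D]_m) != 0.
  case: (pickP (fun l => P *m (delta_mx l 0 : 'cV[D]_m) != 0)) => [l hl|hn]; first by exists l.
  exfalso; move/eqP: hP; apply; apply/matrixP => i j.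
  move: (hn j) => /negbFE/eqP/matrixP/(_ i 0).
  by rewrite -colE !mxE.
move: hl; set d := (delta_mx l 0 : 'cV[D]_m) => hl.
have allu : forall (u : 'cV[D]_m) (y : 'rV[D]_n), S (u *m y).
  move=> u y.
  case: (boolP (P *m u == 0)) => hu.
    have -> : u *m y = (u + d) *m y + - (d *m y)
      by rewrite mulmxDl addrK.
    apply: hadd; last apply: hopp.
    - have hud : P *m (u + d) != 0 by rewrite mulmxDr (eqP hu) add0r.
      have [w hw] := good (u + d) hud.
      exact: hgood hw.
    - have [w hw] := good d hl; exact: hgood hw.
  by have [w hw] := good u hu; exact: hgood hw.
move=> x; rewrite (decomp x); apply: (big_ind S) => //.
Qed.

Lemma delta_col_scal (D : unitRingType) (m : nat) (l : 'I_m) (s : 'M[D]_1) :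
  (delta_mx l 0 : 'cV[D]_m) *m s = s 0 0 *: delta_mx l 0.
Proof.
apply/matrixP => i j; rewrite ord1 !mxE big_ord1 !mxE.
by case: (_ == _) => /=; rewrite ?mul1r ?mulr1 ?mul0r ?mulr0.
Qed.

Lemma dPd (D : unitRingType) (m n : nat) (P : 'M[D]_(n, m)) k l :
  (delta_mx 0 k : 'rV[D]_n) *m P *m (delta_mx l 0 : 'cV[D]_m) = (P k l)%:M.
Proof.
rewrite -rowE -colE; apply/matrixP => i j; rewrite !ord1 !mxE eqxx mulr1n //.
Qed.

Lemma part1 (D : unitRingType) (m n : nat) (P : 'M[D]_(n, m)) :
  division_ring D -> P != 0 -> forall x, gen_alg P (idemP P) x.
Proof.
move=> hD hP.
have [[k l] hkl] : exists kl : 'I_n * 'I_m, P kl.1 kl.2 != 0.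
  case: (pickP (fun kl : 'I_n * 'I_m => P kl.1 kl.2 != 0)) => [kl h|hn]; first by exists kl.
  exfalso; move/eqP: hP; apply; apply/matrixP => i j.
  by move: (hn (i, j)) => /negbFE/eqP ->; rewrite mxE.
move: hkl => /= hkl.
set u0 := (delta_mx l 0 : 'cV[D]_m).
set w0 := ((P k l)^-1 *: delta_mx 0 k : 'rV[D]_n).
have h01 : pr P w0 u0 = 1%:M.
  by rewrite /pr /w0 -!scalemxAl dPd scale_scalar_mx mulVr // hD.
have ha : forall y : 'rV[D]_n, gen_alg P (idemP P) (u0 *m y).
  move=> y; set s := pr P y u0.
  have hz : pr P (y - s *m w0) u0 = 0 by rewrite prBl prMl h01 mulmx1 subrr.
  have -> : u0 *m y = u0 *m (y - s *m w0) + s 0 0 *: (u0 *m w0).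
    by rewrite scalemxAl -delta_col_scal -mulmxA -mulmxDr subrK.
  apply: ga_add; first exact: ring_alg (LA h01 hz).
  by apply: ga_scale; apply: ga_base; apply: idem_r1.
have hb : forall v : 'cV[D]_m, gen_alg P (idemP P) (v *m w0).
  move=> v; set s := pr P w0 v.
  have hz : pr P w0 (v - u0 *m s) = 0 by rewrite prBr prMr h01 mul1mx subrr.
  have -> : v *m w0 = (v - u0 *m s) *m w0 + s 0 0 *: (u0 *m w0).
    by rewrite scalemxAl -delta_col_scal -mulmxDl subrK.
  apply: ga_add; first exact: ring_alg (LA' h01 hz).
  by apply: ga_scale; apply: ga_base; apply: idem_r1.
have hc : forall (u : 'cV[D]_m) (y : 'rV[D]_n), gen_alg P (idemP P) (u *m y).
  move=> u y; have -> : u *m y = bmul P (u *m w0) (u0 *m y) by rewrite bmul_r1 h01 mulmx1.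
  by apply: ga_mul.
move=> x; rewrite (decomp x); apply: (big_ind (gen_alg P (idemP P))) => //.
- exact: ga_zero.
- by move=> *; apply: ga_add.
Qed.

Lemma frame (D : unitRingType) (m n : nat) (P : 'M[D]_(n, m)) (u1 : 'cV[D]_m) (w1 : 'rV[D]_n) :
  division_ring D -> (forall (a : 'cV[D]_n) (b : 'rV[D]_m), P != a *m b) -> pr P w1 u1 = 1%:M ->
  exists (u2 : 'cV[D]_m) (w2 : 'rV[D]_n),
    [/\ pr P w1 u2 = 0, pr P w2 u1 = 0 & pr P w2 u2 = 1%:M].
Proof.
move=> hD hNR h11.
set Q := P - (P *m u1) *m (w1 *m P).
have [[k l] hkl] : exists kl : 'I_n * 'I_m, Q kl.1 kl.2 != 0.
  case: (pickP (fun kl : 'I_n * 'I_m => Q kl.1 kl.2 != 0)) => [kl h|hn]; first by exists kl.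
  exfalso; move: (hNR (P *m u1) (w1 *m P)); rewrite -subr_eq0 -/Q; apply/negP/negPn/eqP.
  apply/matrixP => i j.
  by move: (hn (i, j)) => /negbFE/eqP ->; rewrite mxE.
move: hkl => /= hkl.
set ek := (delta_mx 0 k : 'rV[D]_n).
set el := (delta_mx l 0 : 'cV[D]_m).
have hQ : pr P ek el - pr P ek u1 *m pr P w1 el = (Q k l)%:M.
  rewrite -dPd /Q /pr mulmxBr mulmxBl -/ek -/el.
  by rewrite !mulmxA.
exists ((el - u1 *m pr P w1 el) *m ((Q k l)^-1)%:M).
exists (ek - pr P ek u1 *m w1).
split.
- by rewrite prMr prBr prMr h11 mul1mx subrr mul0mx.
- by rewrite prBl prMl h11 mulmx1 subrr.
- rewrite prMr prBr prMr !prBl !prMl h11 mulmx1 subrr mul0mx subr0 hQ.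
  by rewrite -scalar_mxM mulrV // hD.
Qed.

Lemma part2_col (D : unitRingType) (m n : nat) (P : 'M[D]_(n, m)) (u1 : 'cV[D]_m) (w1 : 'rV[D]_n) :
  division_ring D -> (forall (a : 'cV[D]_n) (b : 'rV[D]_m), P != a *m b) -> pr P w1 u1 = 1%:M ->
  forall y : 'rV[D]_n, gen_ring P (idemP P) (u1 *m y).
Proof.
move=> hD hNR h11 y.
have [u2 [w2 [h12 h21 h22]]] := frame hD hNR h11.
have hl : forall l : 'M[D]_1, gen_ring P (idemP P) (u1 *m (l *m w1)).
  move=> l.
  have -> : u1 *m (l *m w1) = bmul P (u1 *m (l *m w2)) (u2 *m w1).
    by rewrite bmul_r1 prMl h22 mulmx1 mulmxA.
  apply: gr_mul.
  - by apply: (LA h11); rewrite prMl h21 mulmx0.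
  - exact: (LA' h11 h12).
set s := pr P y u1.
have hz : pr P (y - s *m w1) u1 = 0 by rewrite prBl prMl h11 mulmx1 subrr.
have -> : u1 *m y = u1 *m (y - s *m w1) + u1 *m (s *m w1) by rewrite -mulmxDr subrK.
apply: gr_add; [exact: LA h11 hz | exact: hl].
Qed.

Lemma G1 (D : unitRingType) (m n : nat) (P : 'M[D]_(n, m)) (u' u : 'cV[D]_m) (w1 w : 'rV[D]_n) :
  pr P w1 u' = 1%:M -> pr P w u' = 0 -> pr P w u = 1%:M ->
  forall l : 'M[D]_1, gen_add (jordan_idem P) (u' *m (l *m w)).
Proof.
move=> h1 h2 h3 l; apply: gd_base.
set w' := w1 + (l - pr P w1 u) *m w.
have e1 : pr P w' u' = 1%:M by rewrite prDl prMl h2 mulmx0 addr0.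
have e2 : pr P w' u = l by rewrite prDl prMl h3 mulmx1 addrC subrK.
exists (u *m w), (u' *m w'); split; first exact: idem_r1 h3.
split; first exact: idem_r1 e1.
by rewrite !bmul_r1 h2 mulmx0 mul0mx add0r e2 mulmxA.
Qed.

Lemma part3_col (D : unitRingType) (m n : nat) (P : 'M[D]_(n, m)) (u1 : 'cV[D]_m) (w1 : 'rV[D]_n) :
  division_ring D -> (2%:R : D) != 0 -> (forall (a : 'cV[D]_n) (b : 'rV[D]_m), P != a *m b) -> pr P w1 u1 = 1%:M ->
  forall y : 'rV[D]_n, gen_add (jordan_idem P) (u1 *m y).
Proof.
move=> hD h2 hNR h11 y.
have [u2 [w2 [h12 h21 h22]]] := frame hD hNR h11.
have off12 := G1 h11 h21 h22.
have off21 := G1 h22 h12 h11.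
have hz : forall z, pr P z u1 = 0 -> pr P z u2 = 0 -> gen_add (jordan_idem P) (u1 *m z).
  move=> z hz1 hz2.
  have -> : u1 *m z = u1 *m (1%:M *m (z + w2)) - u1 *m (1%:M *m w2).
    by rewrite !mul1mx mulmxDr addrK.
  apply: gd_sub; last exact: off12.
  apply: (G1 (u := u2) (w := z + w2) h11).
  - by rewrite prDl hz1 h21 addr0.
  - by rewrite prDl hz2 h22 add0r.
have hd : forall l : 'M[D]_1, gen_add (jordan_idem P) (u1 *m (l *m w1)).
  move=> l.
  set t := ((2%:R : D)^-1) *: l.
  have htt : t + t = l.
    by rewrite /t -scalerDl -mulr2n -[_ *+ 2]mulr_natr mulVr ?scale1r // hD.
    idtac.
  set W := t *m w1 + (1%:M - t) *m w2.
  have hW1 : pr P W u1 = t by rewrite prDl !prMl h11 h21 mulmx0 addr0 mulmx1.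
  have hW : pr P W (u1 + u2) = 1%:M.
    by rewrite prDr hW1 prDl !prMl h12 h22 mulmx0 add0r mulmx1 addrC subrK.
  have hj : gen_add (jordan_idem P) (bmul P ((u1 + u2) *m W) (u1 *m w1) + bmul P (u1 *m w1) ((u1 + u2) *m W)).
    apply: gd_base; exists ((u1 + u2) *m W), (u1 *m w1); split; first exact: idem_r1 hW.
    by split; first exact: idem_r1 h11.
  have -> : u1 *m (l *m w1) =
     (bmul P ((u1 + u2) *m W) (u1 *m w1) + bmul P (u1 *m w1) ((u1 + u2) *m W))
     - u2 *m (t *m w1) - u1 *m ((1%:M - t) *m w2).
    rewrite !bmul_r1 hW1 prDr h11 h12 addr0 mulmx1 /W -htt.
    rewrite !mulmxDl !mulmxA.
    rewrite [u1 *m (t *m w1 + _)]mulmxDr !mulmxA.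
    set a := u1 *m t *m w1; set b := u2 *m t *m w1.
    rewrite [u1 *m (t *m w1 + (_ + _))]mulmxDr mulmxA -/a.
    set c := u1 *m (1%:M *m w2 + - t *m w2).
    by rewrite -addrA -opprD addrACA addrK.
  apply: gd_sub; last exact: off12.
  by apply: gd_sub; last exact: off21.
set s := pr P y u1.
set s2 := pr P y u2.
set z := y - s *m w1 - s2 *m w2.
have -> : u1 *m y = u1 *m z + u1 *m (s *m w1) + u1 *m (s2 *m w2).
  by rewrite -!mulmxDr /z addrAC !subrK.
apply: gd_add; last exact: off12.
apply: gd_add; last exact: hd.
apply: hz.
- by rewrite /z !prBl !prMl h11 h21 mulmx1 mulmx0 subr0 subrr.
- by rewrite /z !prBl !prMl h12 h22 mulmx1 mulmx0 subr0 subrr.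
Qed.

Lemma rank_nz (D : unitRingType) (m n : nat) (P : 'M[D]_(n, m)) (r : nat) :
  dr_rank P r -> (1 <= r)%N -> P != 0.
Proof.
move=> [[f [finj find]] _] hr.
apply/eqP => hP.
have i0 : 'I_r by exact: Ordinal hr.
have := find (delta_mx 0 i0).
rewrite hP.
have -> : rowsub f (0 : 'M[D]_(n, m)) = 0 by apply/matrixP => i j; rewrite !mxE.
rewrite mulmx0 => /(_ erefl) /matrixP /(_ 0 i0).
by rewrite !mxE !eqxx /= => /eqP; rewrite oner_eq0.
Qed.

Lemma rank_nr (D : unitRingType) (m n : nat) (P : 'M[D]_(n, m)) (r : nat) :
  division_ring D -> dr_rank P r -> (2 <= r)%N ->
  forall (a : 'cV[D]_n) (b : 'rV[D]_m), P != a *m b.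
Proof.
move=> hD [[f [finj find]] _] hr a b.
apply/eqP => hP.
have h0 : (0 < r)%N by apply: leq_trans hr.
pose i0 : 'I_r := Ordinal h0.
pose i1 : 'I_r := Ordinal hr.
have hi : i1 != i0 by [].
set A := rowsub f a.
have hrow : rowsub f P = A *m b by rewrite hP mul_rowsub_mx.
suff [c [hc0 hc]] : exists c : 'rV[D]_r, c != 0 /\ c *m A = 0.
  move/eqP: hc0; apply; apply: find.
  by rewrite hrow mulmxA hc mul0mx.
case: (boolP (A i0 0 == 0)) => ha0.
- exists (delta_mx 0 i0); split.
    apply/eqP => /matrixP /(_ 0 i0); rewrite !mxE !eqxx /= => /eqP.
    by rewrite oner_eq0.
  by rewrite -rowE; apply/matrixP => i j; rewrite !ord1 mxE (eqP ha0) mxE.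
- pose c : 'rV[D]_r := delta_mx 0 i1 - (A i1 0 * (A i0 0)^-1) *: delta_mx 0 i0.
  exists c; split.
    apply/eqP => /matrixP /(_ 0 i1); rewrite !mxE !eqxx (negbTE hi) /= mulr0 subr0 => /eqP.
    by rewrite oner_eq0.
  rewrite mulmxBl -scalemxAl -!rowE.
  apply/matrixP => i j; rewrite !ord1 !mxE.
  have hu : A i0 0 \is a GRing.unit by apply: hD.
  by move: hu; rewrite mxE => hu; rewrite divrK ?subrr.
Qed.

Theorem theorem2p2 (D : unitRingType) (m n : nat) (P : 'M[D]_(n, m)) (r : nat) :
  division_ring D -> (2 <= m)%N -> (2 <= n)%N -> dr_rank P r ->
  ((1 <= r)%N -> forall x : 'M[D]_(m, n), gen_alg P (idemP P) x) /\
  ((2 <= r)%N -> forall x : 'M[D]_(m, n), gen_ring P (idemP P) x) /\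
  ((2 <= r)%N -> (2%:R : D) != 0 -> forall x : 'M[D]_(m, n), gen_add (jordan_idem P) x).
Proof.
move=> hD _ _ hrk; split; last split.
- move=> hr; exact: part1 hD (rank_nz hrk hr).
- move=> hr.
  have h1 : (1 <= r)%N by apply: leq_trans hr.
  apply: (all_cols hD) (rank_nz hrk h1) _.
  + by move=> *; apply: gr_add.
  + by move=> *; apply: gr_opp.
  + exact: gr_zero.
  + move=> u y w hw; exact: part2_col hD (rank_nr hD hrk hr) hw y.
- move=> hr h2.
  have h1 : (1 <= r)%N by apply: leq_trans hr.
  apply: (all_cols hD) (rank_nz hrk h1) _.
  + by move=> *; apply: gd_add.
  + by move=> *; apply: gd_opp.
  + exact: gd_zero.
  + move=> u y w hw; exact: part3_col hD h2 (rank_nr hD hrk hr) hw y.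
Qed.
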